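(* Let $\mathbb{X}$ be a finite set, $\mathcal{H}_A$ a Hilbert space of finite dimension $d_A$, $\{\rho_A^x\}_{x\in\mathbb{X}}$ density operators on $\mathcal{H}_A$, $U_\theta$ a unitary on $\mathcal{H}_A$, $O=\{O_c\}_c$ a POVM on $\mathcal{H}_A$ with finitely many outcomes, and $p\in[0,1]$. Let $\mathcal{D}_{p,d_A}(\rho)=\frac{p}{d_A}I+(1-p)\rho$ and \[ \Gamma(\mathcal{D}_{p,d_A})=\max_{x\in\mathbb{X}}\sum_c\big|\operatorname{tr}(O_cU_\theta\rho_A^xU_\theta^\dagger)-\operatorname{tr}(O_c\mathcal{D}_{p,d_A}(U_\theta\rho_A^xU_\theta^\dagger))\big|. \] Then, writing $\mathcal{D}_{p,d_A}(\rho_A)$ for the family $\{\mathcal{D}_{p,d_A}(\rho_A^x)\}_{x\in\mathbb{X}}$, \[ \mathcal{B}(X\rightarrow A)_{\mathcal{D}_{p,d_A}(\rho_A)}\leq\mathcal{R}(X\rightarrow A)_{\mathcal{D}_{p,d_A}(\rho_A)}\leq\log\Big((1-2d_A)+\frac{4d_A}{\Gamma(\mathcal{D}_{p,d_A})}\Big), \] with the right-hand side interpreted as $+\infty$ when $\Gamma(\mathcal{D}_{p,d_A})=0$.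
   Context: All logarithms are base 2. For a density operator $\rho$ and positive semi-definite $\sigma$, $\widetilde{D}_\infty(\rho\|\sigma)=\log\inf\{\mu\in\mathbb{R}:\rho\leq\mu\sigma\}$ ($+\infty$ if $\operatorname{supp}\rho\not\subseteq\operatorname{supp}\sigma$). For a family $\{\tau^x\}_{x\in\mathbb{X}}$ of density operators, $\mathcal{B}=\min_{\pi\in\Delta(\mathbb{X})}\max_x\widetilde{D}_\infty(\tau^x\|\sum_{x'}\pi(x')\tau^{x'})$ (with $\Delta(\mathbb{X})$ the probability mass functions on $\mathbb{X}$) and $\mathcal{R}=\max_{x,x'}\widetilde{D}_\infty(\tau^x\|\tau^{x'})$. *)

(* Defs.v *)
From HB Require Import structures.
From mathcomp Require Import all_boot all_order all_algebra.
From mathcomp Require Import boolp classical_sets reals constructive_ereal ereal exp.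
From mathcomp.real_closed Require Import complex.
Set Implicit Arguments. Unset Strict Implicit. Unset Printing Implicit Defensive.
Import Order.TTheory GRing.Theory Num.Theory.
Local Open Scope ring_scope.

Section QDefs.
Variable R : realType.
Local Notation C := R[i].

Definition log2 (x : R) : R := ln x / ln 2.

Definition adjmx m n (A : 'M[C]_(m, n)) : 'M[C]_(n, m) := (map_mx (@conjc R) A)^T.

(** positive semi-definite: v^dagger A v >= 0 (real and nonnegative) for all v *)
Definition psd n (A : 'M[C]_n) : Prop :=
  forall v : 'cV[C]_n, 0 <= (adjmx v *m A *m v) 0 0.

Definition loewner_le n (A B : 'M[C]_n) : Prop := psd (B - A).

Definition density n (rho : 'M[C]_n) : Prop := psd rho /\ \tr rho = 1.

Definition unitary n (U : 'M[C]_n) : Prop := U *m adjmx U = 1%:M.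

Definition povm n (K : finType) (O : K -> 'M[C]_n) : Prop :=
  (forall c, psd (O c)) /\ \sum_c O c = 1%:M.

(** supp rho subset of supp sigma  <=>  ker sigma subset of ker rho (sigma psd) *)
Definition supp_sub n (rho sigma : 'M[C]_n) : Prop :=
  forall v : 'cV[C]_n, sigma *m v = 0 -> rho *m v = 0.

Definition Dmax n (rho sigma : 'M[C]_n) : \bar R :=
  if `[< supp_sub rho sigma >] then
    (log2 (inf [set mu : R | loewner_le rho ((mu%:C)%C *: sigma)]))%:E
  else +oo%E.

Definition pmf (X : finType) (pi : X -> R) : Prop :=
  (forall x, 0 <= pi x) /\ \sum_x pi x = 1.

Definition Bquant (X : finType) n (tau : X -> 'M[C]_n) : \bar R :=
  ereal_inf [set (\big[maxe/-oo%E]_x Dmax (tau x) (\sum_x' ((pi x')%:C)%C *: tau x'))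
            | pi in [set pi : X -> R | pmf pi]].

Definition Rquant (X : finType) n (tau : X -> 'M[C]_n) : \bar R :=
  \big[maxe/-oo%E]_x \big[maxe/-oo%E]_x' Dmax (tau x) (tau x').

Definition depol n (p : R) (rho : 'M[C]_n) : 'M[C]_n :=
  ((p / n%:R)%:C)%C%:M + ((1 - p)%:C)%C *: rho.

Definition Gamma (X : finType) (K : finType) n (p : R) (rho : X -> 'M[C]_n)
    (U : 'M[C]_n) (O : K -> 'M[C]_n) : R :=
  \big[Order.max/0]_x \sum_c
     Normc.normc (\tr (O c *m (U *m rho x *m adjmx U))
                  - \tr (O c *m depol p (U *m rho x *m adjmx U))).

End QDefs.

(* Main.v *)
Require Import Defs.
From HB Require Import structures.
From mathcomp Require Import all_boot all_order all_algebra.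
From mathcomp Require Import boolp classical_sets reals constructive_ereal ereal exp.
From mathcomp.real_closed Require Import complex.
From mathcomp Require Import ring lra.
Import Order.TTheory GRing.Theory Num.Theory.
Local Open Scope ring_scope.
Set Implicit Arguments. Unset Strict Implicit. Unset Printing Implicit Defensive.

Section S.
Variable R : realType.
Local Notation C := R[i].

Definition qf n (A : 'M[C]_n) (v : 'cV[C]_n) := (adjmx v *m A *m v) 0 0.

Lemma adjmxD m n (A B : 'M[C]_(m,n)) : adjmx (A + B) = adjmx A + adjmx B.
Proof. by apply/matrixP => i j; rewrite !mxE rmorphD. Qed.
Lemma adjmxZ m n (c : C) (A : 'M[C]_(m,n)) : adjmx (c *: A) = conjc c *: adjmx A.
Proof. by apply/matrixP => i j; rewrite !mxE rmorphM. Qed.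
Lemma adjmxM m n k (A : 'M[C]_(m,n)) (B : 'M[C]_(n,k)) :
  adjmx (A *m B) = adjmx B *m adjmx A.
Proof. by rewrite /adjmx map_mxM trmx_mul. Qed.
Lemma adjmxK m n (A : 'M[C]_(m,n)) : adjmx (adjmx A) = A.
Proof. by apply/matrixP => i j; rewrite !mxE conjcK. Qed.
Lemma adjmx_delta m n (i : 'I_m) (j : 'I_n) : adjmx (delta_mx i j : 'M[C]_(m,n)) = delta_mx j i.
Proof. by apply/matrixP => a b; rewrite !mxE andbC conjc_nat. Qed.
Lemma adjmx_st n (A : 'M[C]_n) : adjmx A = (A ^t* )%sesqui.
Proof. by rewrite /adjmx map_trmx. Qed.

Lemma dAd n (B : 'M[C]_n) i j : ((delta_mx 0 i : 'rV[C]_n) *m B *m (delta_mx j 0 : 'cV[C]_n)) 0 0 = B i j.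
Proof. by rewrite -rowE -colE !mxE. Qed.

Lemma qfD n (A B : 'M[C]_n) v : qf (A + B) v = qf A v + qf B v.
Proof. by rewrite /qf mulmxDr mulmxDl mxE. Qed.
Lemma qfN n (A : 'M[C]_n) v : qf (- A) v = - qf A v.
Proof. by rewrite /qf mulmxN mulNmx mxE. Qed.
Lemma qfB n (A B : 'M[C]_n) v : qf (A - B) v = qf A v - qf B v.
Proof. by rewrite qfD qfN. Qed.
Lemma qfZ n (c : C) (A : 'M[C]_n) v : qf (c *: A) v = c * qf A v.
Proof. by rewrite /qf -scalemxAr -scalemxAl mxE. Qed.
Lemma qfS n (c : C) v : qf (c%:M : 'M[C]_n) v = c * qf 1%:M v.
Proof. by rewrite -[c%:M]scalemx1 qfZ. Qed.

Lemma qf_conj n (A M : 'M[C]_n) v : qf (adjmx M *m A *m M) v = qf A (M *m v).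
Proof. by rewrite /qf adjmxM !mulmxA. Qed.

Lemma qf_delta n (A : 'M[C]_n) i : qf A (delta_mx i 0) = A i i.
Proof. by rewrite /qf adjmx_delta dAd. Qed.

Lemma qf_diag n (l : 'rV[C]_n) w :
  qf (diag_mx l) w = \sum_i l 0 i * (conjc (w i 0) * w i 0).
Proof.
rewrite /qf mxE; apply: eq_bigr => k _; rewrite mul_mx_diag !mxE.
by rewrite mulrA [_ * l 0 k]mulrC -mulrA.
Qed.

Lemma qf1 n w : qf (1%:M : 'M[C]_n) w = \sum_i conjc (w i 0) * w i 0.
Proof.
rewrite /qf mulmx1 mxE; apply: eq_bigr => k _; by rewrite !mxE.
Qed.

Lemma qf1_ge0 n (w : 'cV[C]_n) : 0 <= qf 1%:M w.
Proof. rewrite qf1; apply: sumr_ge0 => i _; rewrite mulrC; exact: (@mul_conjC_ge0 C). Qed.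

Lemma qf1_eq0 n (w : 'cV[C]_n) : qf 1%:M w = 0 -> w = 0.
Proof.
rewrite qf1 => /psumr_eq0P H; apply/matrixP => i j; rewrite ord1 mxE.
have Hi : (conjc (w i 0) * w i 0) = 0.
  apply: H => // k _; rewrite mulrC; exact: (@mul_conjC_ge0 C).
by move: Hi => /eqP; rewrite mulrC (@mul_conjC_eq0 C) => /eqP.
Qed.

Lemma herm_scalar (z w : C) : z + w \is Num.real -> ('i%C * (z - w)) \is Num.real ->
  z = conjc w.
Proof.
move: z w => [a b] [c e].
rewrite /= !complex_real.
rewrite mul0r mul1r add0r subr_eq0 addr_eq0 => /eqP -> /eqP ->.
by [].
Qed.

Definition bf n (A : 'M[C]_n) (u w : 'cV[C]_n) := (adjmx u *m A *m w) 0 0.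

Lemma qf_expand n (A : 'M[C]_n) u w c :
  qf A (u + c *: w) = qf A u + c * bf A u w + conjc c * bf A w u + conjc c * c * qf A w.
Proof.
rewrite /qf /bf adjmxD adjmxZ !mulmxDl !mulmxDr -!scalemxAl -!scalemxAr !mxE.
ring.
Qed.

Lemma real_eq (x y : C) : x = y -> x \is Num.real -> y \is Num.real.
Proof. by move->. Qed.

Lemma psd_herm n (A : 'M[C]_n) : psd A -> forall i j, A i j = conjc (A j i).
Proof.
move=> HA i j.
have bfd : forall a b, bf A (delta_mx a 0) (delta_mx b 0) = A a b.
  by move=> a b; rewrite /bf adjmx_delta dAd.
have rl : forall v, qf A v \is Num.real by move=> v; apply: ger0_real; apply: HA.
apply: herm_scalar.
  have := rl (delta_mx i 0 + 1 *: delta_mx j 0).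
  rewrite qf_expand !bfd conjc1 !mul1r => H.
  have := rpredB (rpredB H (rl (delta_mx i 0))) (rl (delta_mx j 0)).
  by move=> H'; apply: (real_eq _ H'); rewrite !qf_delta; ring.
have := rl (delta_mx i 0 + 'i%C *: delta_mx j 0).
rewrite qf_expand !bfd !qf_delta => H.
have := rpredB (rpredB H (rl (delta_mx i 0))) (rl (delta_mx j 0)).
move=> H'; apply: (real_eq _ H'); rewrite !qf_delta.
have -> : conjc ('i%C : C) = - 'i%C by apply/eqP; rewrite eq_complex /= oppr0 !eqxx.
have -> : (- 'i%C * 'i%C : C) = 1.
  by rewrite mulNr -expr2 sqr_i opprK.
ring.
Qed.

Lemma psd_spec n (A : 'M[C]_n) : psd A -> exists (P : 'M[C]_n) (l : 'rV[C]_n),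
  [/\ P *m adjmx P = 1%:M, adjmx P *m P = 1%:M, A = adjmx P *m diag_mx l *m P
    & forall i, 0 <= l 0 i].
Proof.
move=> HA.
have herm : (A ^t* )%sesqui = A.
  apply/matrixP => i j; rewrite !mxE; exact/esym/psd_herm.
have normal : A \is normalmx by apply/normalmxP; rewrite herm.
have /orthomx_spectralP E := normal.
have U := spectral_unitarymx A.
rewrite (invmx_unitary U) -adjmx_st in E.
have /unitarymxP U1 := U; rewrite -adjmx_st in U1.
have U2 := mulmx1C U1.
move: (spectralmx A) (spectral_diag A) E U1 U2 => P l E U1 U2.
exists P, l; split => // i.
have : 0 <= qf A (adjmx P *m delta_mx i 0) by apply: HA.
rewrite -qf_conj adjmxK E !mulmxA U1 mul1mx -mulmxA U1 mulmx1 qf_delta mxE eqxx.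
by rewrite mulr1n.
Qed.

Lemma tr_ge0 n (A : 'M[C]_n) : psd A -> 0 <= \tr A.
Proof. by move=> HA; apply: sumr_ge0 => i _; rewrite -qf_delta; apply: HA. Qed.

Lemma tr_mul_ge0 n (B A : 'M[C]_n) : psd B -> psd A -> 0 <= \tr (B *m A).
Proof.
move=> HB /psd_spec [P [l [U1 U2 E Hl]]].
rewrite E !mulmxA mxtrace_mulC !mulmxA /mxtrace.
apply: sumr_ge0 => i _; rewrite mul_mx_diag mxE; apply: mulr_ge0 => //.
rewrite -qf_delta -[X in qf (X *m _ *m _)]adjmxK qf_conj; exact: HB.
Qed.

Lemma psd_le_tr n (A : 'M[C]_n) v : psd A -> qf A v <= \tr A * qf 1%:M v.
Proof.
move=> /psd_spec [P [l [U1 U2 E Hl]]].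
have trE : \tr A = \sum_i l 0 i.
  by rewrite E mxtrace_mulC mulmxA U1 mul1mx mxtrace_diag.
have q1 : qf 1%:M v = qf 1%:M (P *m v).
  by rewrite -qf_conj mulmx1 U2.
rewrite trE q1 E qf_conj qf_diag qf1 mulr_suml.
apply: ler_sum => i _; apply: ler_wpM2l => //.
rewrite (bigD1 i) //= lerDl; apply: sumr_ge0 => k _.
rewrite mulrC; exact: (@mul_conjC_ge0 C).
Qed.

Lemma normcE' (z : C) : ((Normc.normc z)%:C)%C = `|z|.
Proof. case: z => a b. by rewrite normc_def. Qed.

Lemma normc_ge0 (z : C) : 0 <= Normc.normc z.
Proof. by rewrite -ler0c normcE'. Qed.

Lemma psd_conjU n (A U : 'M[C]_n) : psd A -> psd (U *m A *m adjmx U).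
Proof.
move=> HA v; change (0 <= qf (U *m A *m adjmx U) v).
by rewrite -[X in qf (X *m _ *m _)]adjmxK qf_conj; apply: HA.
Qed.

Lemma psd1 n : psd (1%:M : 'M[C]_n).
Proof. by move=> v; apply: qf1_ge0. Qed.

Lemma tr_conjU n (A U : 'M[C]_n) : unitary U -> \tr (U *m A *m adjmx U) = \tr A.
Proof.
move=> HU; have U2 := mulmx1C HU.
by rewrite mxtrace_mulC mulmxA U2 mul1mx.
Qed.

Lemma diffE n (p : R) (O s : 'M[C]_n) :
  \tr (O *m s) - \tr (O *m depol p s) = (p%:C)%C * \tr (O *m s) - ((p / n%:R)%:C)%C * \tr O.
Proof.
rewrite /depol mulmxDr mul_mx_scalar -scalemxAr mxtraceD !mxtraceZ.
rewrite rmorphB rmorph1; ring.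
Qed.

Lemma gamma_term n (K : finType) (p : R) (O : K -> 'M[C]_n) (s : 'M[C]_n) :
  (0 < n)%N -> 0 <= p -> povm O -> psd s -> \tr s = 1 ->
  \sum_c Normc.normc (\tr (O c *m s) - \tr (O c *m depol p s)) <= 2 * p.
Proof.
move=> n0 p0 [HO1 HO2] Hs trs.
rewrite -lecR raddf_sum /=.
under eq_bigr => c _ do rewrite normcE' diffE.
have n0' : (n%:R : R) != 0 by rewrite pnatr_eq0 -lt0n.
apply: (@le_trans _ _ (\sum_c ((p%:C)%C * \tr (O c *m s) + ((p / n%:R)%:C)%C * \tr (O c)))).
  apply: ler_sum => c _.
  apply: le_trans (ler_normB _ _) _.
  rewrite !normrM !ger0_norm //; first exact: tr_ge0.
  - by rewrite ler0c divr_ge0 // ler0n.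
  - exact: tr_mul_ge0.
  - by rewrite ler0c.
rewrite big_split /= -!mulr_sumr.
have -> : \sum_c \tr (O c *m s) = 1.
  by rewrite -raddf_sum -mulmx_suml HO2 mul1mx; exact: trs.
have -> : \sum_c \tr (O c) = n%:R.
  by rewrite -raddf_sum HO2; exact: mxtrace1.
rewrite mulr1 -(rmorph_nat (real_complex R)) -!rmorphM -rmorphD lecR.
by rewrite divfK // -mulr2n mulr_natl.
Qed.

Lemma ge0_C (z : C) : 0 <= z -> z = ((complex.Re z)%:C)%C /\ 0 <= complex.Re z.
Proof.
case: z => a b; rewrite lecE /= => /andP [/eqP -> ha]; split => //.
Qed.

Lemma tr_depol n (p : R) (r : 'M[C]_n) : (0 < n)%N -> \tr r = 1 -> \tr (depol p r) = 1.
Proof.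
move=> n0 tr1.
have n0' : (n%:R : R) != 0 by rewrite pnatr_eq0 -lt0n.
rewrite /depol mxtraceD mxtraceZ mxtrace_scalar tr1 mulr1.
rewrite -rmorphMn -rmorphD -mulr_natr divfK // addrC subrK; exact: rmorph1.
Qed.

Lemma qf_depol n (p : R) (r : 'M[C]_n) v :
  qf (depol p r) v = ((p / n%:R)%:C)%C * qf 1%:M v + ((1 - p)%:C)%C * qf r v.
Proof. by rewrite /depol qfD qfS qfZ. Qed.

Lemma supp_depol n (p : R) (r r' : 'M[C]_n) : (0 < n)%N -> 0 < p -> p <= 1 ->
  psd r' -> supp_sub (depol p r) (depol p r').
Proof.
move=> n0 pp p1 Hr' v Hv.
have n0' : (0 : R) < n%:R by rewrite ltr0n.
have q0 : qf (depol p r') v = 0 by rewrite /qf -mulmxA Hv mulmx0 mxE.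
move: q0; rewrite qf_depol => /eqP; rewrite paddr_eq0; last first.
- by apply: mulr_ge0; [rewrite ler0c subr_ge0 | apply: Hr'].
- by apply: mulr_ge0; [rewrite ler0c divr_ge0 // ?ltW | apply: qf1_ge0].
case/andP => /eqP; move/eqP; rewrite mulf_eq0 => /orP [].
  by rewrite (inj_eq (@complexI R)) mulf_eq0 invr_eq0 gt_eqF //= gt_eqF.
by move=> /eqP /qf1_eq0 -> _; rewrite mulmx0.
Qed.

Lemma loew_depol n (p : R) (r r' : 'M[C]_n) : (0 < n)%N -> 0 < p -> p <= 1 ->
  density r -> density r' ->
  loewner_le (depol p r) (((1 - n%:R + n%:R / p)%:C)%C *: depol p r').
Proof.
move=> n0 pp p1 [Hr tr1] [Hr' _] v.
change (0 <= qf (((1 - n%:R + n%:R / p)%:C)%C *: depol p r' - depol p r) v).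
have n0' : (0 : R) < n%:R by rewrite ltr0n.
rewrite qfB qfZ !qf_depol.
have [ea ha] := ge0_C (qf1_ge0 v).
have [eb hb] := ge0_C (Hr v : 0 <= qf r v).
have [eb' hb'] := ge0_C (Hr' v : 0 <= qf r' v).
have hle := psd_le_tr v Hr.
rewrite tr1 mul1r {1}ea {1}eb in hle; rewrite lecR in hle.
rewrite ea eb eb' -!(rmorphM (real_complex R)) -!(rmorphD (real_complex R)) -(rmorphM (real_complex R)) -(rmorphB (real_complex R)) ler0c.
set a := complex.Re _ in ea ha hle *.
set b := complex.Re (qf r v) in eb hb hle *.
set b' := complex.Re (qf r' v) in eb' hb' *.
set mu := 1 - n%:R + n%:R / p.
have h1 : mu * (p / n%:R) = p / n%:R + 1 - p.
  rewrite /mu; field; rewrite gt_eqF //= gt_eqF //.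
have mu1 : 1 <= mu.
  have : n%:R <= n%:R / p :> R by rewrite ler_pdivlMr // ler_piMr // ltW.
  rewrite /mu; lra.
have E : mu * (p / n%:R * a + (1 - p) * b') - (p / n%:R * a + (1 - p) * b)
   = (mu * (p / n%:R)) * a + mu * ((1 - p) * b') - (p / n%:R * a + (1 - p) * b) by ring.
rewrite E h1.
have f1 : 0 <= (1 - p) * (a - b) by apply: mulr_ge0; rewrite subr_ge0.
have f2 : 0 <= mu * ((1 - p) * b') by apply: mulr_ge0; [apply: le_trans mu1 | apply: mulr_ge0; rewrite ?subr_ge0].
nra.
Qed.

Lemma dmax_bound n (p : R) (r r' : 'M[C]_n) : (0 < n)%N -> 0 < p -> p <= 1 ->
  density r -> density r' ->
  (Dmax (depol p r) (depol p r') <= (log2 (1 - n%:R + n%:R / p))%:E)%E.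
Proof.
move=> n0 pp p1 Dr Dr'.
rewrite /Dmax asboolT; last by apply: supp_depol => //; case: Dr'.
rewrite lee_fin.
match goal with |- context [inf ?X] => set S := X end.
set mu := 1 - n%:R + n%:R / p.
have inS : S mu by apply: loew_depol.
have lb : forall m, S m -> 1 <= m.
  move=> m Sm; have := tr_ge0 Sm.
  rewrite raddfB /= mxtraceZ !tr_depol //; try by [case: Dr | case: Dr'].
  by rewrite mulr1 -(rmorph1 (real_complex R)) -(rmorphB (real_complex R)) ler0c subr_ge0.
have hlb : has_lbound S by exists 1 => m /lb.
have i1 : 1 <= inf S by apply: lb_le_inf; [exists mu | move=> m /lb].
have imu : inf S <= mu by apply: ge_inf.
rewrite /log2 ler_pM2r; last by rewrite invr_gt0 ln_gt0 // ltr1n.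
have ip : 0 < inf S by apply: lt_le_trans i1.
have mp : 0 < mu by apply: lt_le_trans imu.
by rewrite ler_ln ?posrE.
Qed.

End S.

Unset Implicit Arguments.

Lemma normc00 (R : realType) : Normc.normc (0 : R[i]) = 0.
Proof. by apply: (@complexI R); rewrite normcE' normr0. Qed.

Theorem corollary3 (R : realType) (X : finType) (K : finType) (d : nat)
    (x0 : X) (rho : X -> 'M[R[i]]_d) (U : 'M[R[i]]_d) (O : K -> 'M[R[i]]_d) (p : R) :
  (0 < d)%N ->
  (forall x, density (rho x)) ->
  unitary U ->
  povm O ->
  0 <= p <= 1 ->
  let tau := fun x => depol p (rho x) in
  let G := Gamma p rho U O in
  (Bquant tau <= Rquant tau)%E /\
  (Rquant tau <= (if (G == 0)%R then +oo
                  else (log2 ((1 - 2 * d%:R) + 4 * d%:R / G)%R)%:E))%E.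
Proof.
move=> d0 Hrho HU HO /andP[p0 p1] tau G; split.
  pose pi := fun x : X => if x == x0 then (1 : R) else 0.
  have Hpi : pmf pi.
    split; first by move=> x; rewrite /pi; case: eqP.
    rewrite (bigD1 x0) //= big1 => [|x /negbTE hx]; first by rewrite /pi eqxx addr0.
    by rewrite /pi hx.
  have Hs : \sum_x' ((pi x')%:C)%C *: tau x' = tau x0.
    rewrite (bigD1 x0) //= big1 => [|x /negbTE hx]; last by rewrite /pi hx scale0r.
    by rewrite /pi eqxx addr0 scale1r.
  apply: (@le_trans _ _ (\big[maxe/-oo%E]_x Dmax (tau x) (tau x0))).
    rewrite -Hs; apply: ereal_inf_lbound; by exists pi.
  by apply: le_bigmax2 => x _; exact: (le_bigmax _ (fun x' => Dmax (tau x) (tau x')) x0).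
case: ifPn => [_|Gn0]; first exact: leey.
have G0 : 0 <= G.
  rewrite /G /Gamma; apply: (big_ind (fun y => 0 <= y)) => //.
    by move=> a b ha hb; rewrite le_max ha.
  by move=> x _; apply: sumr_ge0 => c _; apply: normc_ge0.
have pp : 0 < p.
  rewrite lt_neqAle p0 andbT; apply: contra Gn0 => /eqP p00.
  rewrite /G /Gamma; apply/eqP; apply: (big_ind (fun y => y = 0)) => //.
    by move=> a b -> ->; rewrite maxxx.
  move=> x _; apply: big1 => c _.
  have z1 : (p%:C)%C = 0 :> R[i] by rewrite -p00.
  have z2 : ((p / d%:R)%:C)%C = 0 :> R[i] by rewrite -p00 mul0r.
  by rewrite diffE z1 z2 !mul0r subrr normc00.
have G2p : G <= 2 * p.
  rewrite /G /Gamma; apply: bigmax_le => [|x _]; first by rewrite mulr_ge0.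
  have [Hr tr1] := Hrho x.
  apply: gamma_term => //; first exact: psd_conjU.
  by rewrite tr_conjU.
have Gp : 0 < G by rewrite lt_neqAle eq_sym Gn0.
apply: bigmax_le => [|x _]; first exact: leNye.
apply: bigmax_le => [|x' _]; first exact: leNye.
apply: le_trans (dmax_bound _ _ _ _ _) _ => //.
rewrite lee_fin.
have dpos : (0 : R) < d%:R by rewrite ltr0n.
set a := d%:R / p.
set b := 4 * d%:R / G.
have ha : d%:R <= a by rewrite /a ler_pdivlMr // ler_piMr // ltW.
have hb : 2 * a <= b.
  rewrite /b ler_pdivlMr // /a.
  have : 2 * (d%:R / p) * G <= 2 * (d%:R / p) * (2 * p).
    by apply: ler_wpM2l => //; rewrite mulr_ge0 // divr_ge0 // ltW.
  have -> : 2 * (d%:R / p) * (2 * p) = 4 * d%:R :> R.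
    by field; rewrite gt_eqF.
  by [].
have mup : 0 < 1 - d%:R + a by lra.
rewrite /log2 ler_pM2r; last by rewrite invr_gt0 ln_gt0 // ltr1n.
rewrite ler_ln ?posrE; try lra.
Qed.
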